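(* There exist uncountably many Liouville numbers $\xi$ such that \[ w_{=2}(\xi) = w_{=2}^{*}(\xi) = +\infty. \]
   Context: For a polynomial $P \in \mathbb{Z}[X]$, $H(P)$ denotes the maximum of the absolute values of its coefficients. For a real algebraic number $\alpha$, $H(\alpha) = H(P)$, where $P$ is the minimal polynomial of $\alpha$ over $\mathbb{Z}$. Let $\xi$ be a real number. $w_1(\xi)$ is the supremum of the real numbers $w$ such that, for arbitrarily large $H$, there is a polynomial $P \in \mathbb{Z}[X]$ of degree at most $1$ with $H(P) \leq H$ and $0 < |P(\xi)| \leq H^{-w}$. A real number $\xi$ is a Liouville number if $w_1(\xi) = +\infty$. $w_{=2}(\xi)$ is the supremum of the real numbers $w$ such that, for arbitrarily large $H$, there is an irreducible polynomial $P \in \mathbb{Z}[X]$ of degree exactly $2$ with $H(P) \leq H$ and $0 < |P(\xi)| \leq H^{-w}$. $w_{=2}^{*}(\xi)$ is the supremum of the real numbers $w^{*}$ such that, for arbitrarily large $H$, there is a real algebraic number $\alpha$ of degree exactly $2$ with $H(\alpha) \leq H$ and $0 < |\xi - \alpha| \leq H(\alpha)^{-1} H^{-w^{*}}$. *)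

(* Defs.v *)
From HB Require Import structures.
From mathcomp Require Import all_boot all_order all_algebra.
From mathcomp Require Import all_classical all_reals all_analysis.
Set Implicit Arguments. Unset Strict Implicit. Unset Printing Implicit Defensive.
Import Order.TTheory GRing.Theory Num.Theory.
Local Open Scope ring_scope.
Local Open Scope classical_set_scope.

Definition heightZ (P : {poly int}) : nat := (\max_(i < size P) absz (P`_i)%R)%N.

Definition evalZ {R : realType} (P : {poly int}) (x : R) : R :=
  (map_poly (fun z : int => z%:~R) P).[x].

Definition irreducibleZ (P : {poly int}) : Prop :=
  P != 0 /\ P \isn't a GRing.unit /\
  forall Q S : {poly int}, P = Q * S -> Q \is a GRing.unit \/ S \is a GRing.unit.

(* P is the minimal polynomial of a over Z: nonzero, a is a root, primitive
   with positive leading coefficient (zcontents P = 1), and of minimal degree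
   among nonzero integer polynomials vanishing at a *)
Definition minpolyZ {R : realType} (a : R) (P : {poly int}) : Prop :=
  P != 0 /\ evalZ P a = 0 /\ zcontents P = 1 /\
  forall Q : {poly int}, Q != 0 -> evalZ Q a = 0 -> (size P <= size Q)%N.

Definition alg_deg2_height {R : realType} (a : R) (h : nat) : Prop :=
  exists P : {poly int}, minpolyZ a P /\ size P = 3%N /\ heightZ P = h.

Definition wset {R : realType} (C : {poly int} -> Prop) (xi : R) : set R :=
  [set w | forall H0 : R, exists H : R, H0 <= H /\
     exists P : {poly int}, C P /\ (heightZ P)%:R <= H /\
       0 < `|evalZ P xi| /\ `|evalZ P xi| <= H `^ (- w)].

Definition w1 {R : realType} (xi : R) : \bar R :=
  ereal_sup [set w%:E | w in wset (fun P => (size P <= 2)%N) xi].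

Definition liouville {R : realType} (xi : R) : Prop := w1 xi = +oo%E.

Definition w_eq2 {R : realType} (xi : R) : \bar R :=
  ereal_sup [set w%:E | w in wset (fun P => irreducibleZ P /\ size P = 3%N) xi].

Definition wstar_set {R : realType} (xi : R) : set R :=
  [set ws | forall H0 : R, exists H : R, H0 <= H /\
     exists (a : R) (h : nat), alg_deg2_height a h /\ h%:R <= H /\
       0 < `|xi - a| /\ `|xi - a| <= (h%:R)^-1 * H `^ (- ws)].

Definition w_eq2_star {R : realType} (xi : R) : \bar R :=
  ereal_sup [set w%:E | w in wstar_set xi].

(* Main.v *)
Require Import Defs.
From HB Require Import structures.
From mathcomp Require Import all_boot all_order all_algebra.
From mathcomp Require Import all_classical all_reals all_analysis.
From mathcomp Require Import zify ring lra.
Set Implicit Arguments. Unset Strict Implicit. Unset Printing Implicit Defensive.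
Import Order.TTheory GRing.Theory Num.Theory.
Local Open Scope ring_scope.

Lemma coef_le_height (P : {poly int}) i : (absz (P`_i)%R <= heightZ P)%N.
Proof.
rewrite /heightZ; case: (ltnP i (size P)) => hi.
  exact: (@leq_bigmax_cond _ _ (fun j : 'I_(size P) => absz P`_j) (Ordinal hi)).
by rewrite nth_default.
Qed.

Lemma height_le (P : {poly int}) (B : nat) :
  (forall i, absz (P`_i)%R <= B)%N -> (heightZ P <= B)%N.
Proof. by move=> h; apply/bigmax_leqP => i _; apply: h. Qed.

Lemma height_ge1 (P : {poly int}) : P != 0 -> (1 <= heightZ P)%N.
Proof.
move=> P0; apply: leq_trans (coef_le_height P (size P).-1).
rewrite absz_gt0; have := P0; rewrite -lead_coef_eq0 /lead_coef; by [].
Qed.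

Lemma evalZ_wide (R : realType) (P : {poly int}) (x : R) n :
  (size P <= n)%N -> evalZ P x = \sum_(i < n) (P`_i)%:~R * x ^+ i.
Proof.
move=> hs; rewrite /evalZ (horner_coef_wide (n:=n)).
  by apply: eq_bigr => i _; rewrite coef_map.
by rewrite size_map_inj_poly //; apply: intr_inj.
Qed.

Lemma sq_ne2 (r : rat) : r ^+ 2 != 2.
Proof.
apply/eqP => h.
have d0 : (denq r)%:~R != 0 :> rat by rewrite intr_eq0 denq_neq0.
have e : (numq r ^+ 2 = 2 * denq r ^+ 2)%R.
  apply/(@intr_inj rat); rewrite rmorphXn /= rmorphM /= rmorphXn /=.
  have := congr1 (fun t => t * (denq r)%:~R ^+ 2) h.
  by rewrite /= -{1}(divq_num_den r) expr_div_n divfK ?expf_neq0 // => ->.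
have en : (absz (numq r) ^ 2 = 2 * absz (denq r) ^ 2)%N.
  by have := congr1 absz e; rewrite abszM !abszX.
have cp := coprime_num_den r.
set a := absz (numq r) in en cp; set d := absz (denq r) in en cp.
have h2a : (2 %| a)%N.
  have : (2 %| a * a)%N by rewrite -[(a*a)%N]/(a^2)%N en dvdn_mulr.
  by rewrite Euclid_dvdM // orbb.
case/dvdnP: h2a => k ak.
have ed : (d ^ 2 = 2 * k ^ 2)%N.
  by move: en; rewrite ak; nia.
have h2d : (2 %| d)%N.
  have : (2 %| d * d)%N by rewrite -[(d*d)%N]/(d^2)%N ed dvdn_mulr.
  by rewrite Euclid_dvdM // orbb.
move: cp; rewrite /coprime => /eqP g1.
have : (2 %| gcdn a d)%N by rewrite dvdn_gcd h2d ak dvdn_mull.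
by rewrite g1.
Qed.


Lemma evalZM (R : realType) (P Q : {poly int}) (x : R) :
  evalZ (P * Q) x = evalZ P x * evalZ Q x.
Proof. by rewrite /evalZ rmorphM /= hornerM. Qed.

Lemma evalZZ (R : realType) (a : int) (P : {poly int}) (x : R) :
  evalZ (a *: P) x = a%:~R * evalZ P x.
Proof. by rewrite /evalZ map_polyZ /= hornerZ. Qed.

Lemma minpoly_irr (R : realType) (a : R) (P : {poly int}) :
  minpolyZ a P -> size P = 3%N -> irreducibleZ P.
Proof.
move=> [P0 [Pa [cP minP]]] sP; split=> //; split.
  by rewrite poly_unitE sP.
move=> Q Sp PQS.
have Q0 : Q != 0 by apply: contraNneq P0; rewrite PQS => ->; rewrite mul0r.
have S0 : Sp != 0 by apply: contraNneq P0; rewrite PQS => ->; rewrite mulr0.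
have sPQ := size_mul Q0 S0; rewrite -PQS sP in sPQ.
have cQS : zcontents Q * zcontents Sp = 1 by rewrite -zcontentsM -PQS.
have key : forall U V : {poly int}, U != 0 -> V != 0 ->
   zcontents U * zcontents V = 1 ->
   (3 = (size U + size V).-1)%N -> evalZ U a = 0 -> V \is a GRing.unit.
  move=> U V U0 V0 cUV sUV Ua.
  have := minP U U0 Ua; rewrite sP => hU.
  have sV : size V = 1%N.
    have : (0 < size V)%N by rewrite size_poly_gt0.
    lia.
  move/eqP: sV => /size_poly1P [c c0 Vc].
  rewrite Vc poly_unitE size_polyC c0 /= coefC /=.
  apply: (@intUnitRing.unitzPl _ (zcontents U)).
  move: cUV; rewrite Vc -[c%:P]mulr1 mul_polyC zcontentsZ.
  by rewrite (@zcontents_monic 1) ?monic1 // mulr1.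
have : evalZ Q a * evalZ Sp a = 0 by rewrite -evalZM -PQS.
move/eqP; rewrite mulf_eq0 => /orP [/eqP Qa | /eqP Sa].
  by right; apply: (key Q Sp).
left; apply: (key Sp Q) => //; first by rewrite mulrC.
by rewrite addnC.
Qed.


Definition Ep (Q m c : int) : {poly int} :=
  Poly [:: m ^+ 2 - 2 * c ^+ 2; - (2 * m * Q); Q ^+ 2].

Section Quad.
Variable R : realType.
Variables Q m c : int.
Hypothesis Q0 : Q != 0.
Hypothesis c0 : c != 0.

Let s : R := Num.sqrt 2.
Lemma s2 : s ^+ 2 = 2. Proof. by rewrite sqr_sqrtr. Qed.

Definition alphaq : R := (m%:~R + c%:~R * s) / Q%:~R.

Lemma size_Ep : (size (Ep Q m c) <= 3)%N.
Proof. exact: size_Poly. Qed.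

Lemma evalEp (x : R) :
  evalZ (Ep Q m c) x = (Q%:~R * x - m%:~R) ^+ 2 - 2 * (c%:~R) ^+ 2.
Proof.
rewrite (evalZ_wide _ size_Ep) !big_ord_recr big_ord0 /= !coef_Poly /=.
rewrite !(rmorphB, rmorphM, rmorphXn, rmorphN) /=.
have -> : (2%:~R : R) = 2 by [].
ring.
Qed.

Lemma evalEp_fact (x : R) : evalZ (Ep Q m c) x =
  (Q%:~R * x - m%:~R - c%:~R * s) * (Q%:~R * x - m%:~R + c%:~R * s).
Proof. rewrite evalEp -s2; ring. Qed.

Lemma Qalpha : Q%:~R * alphaq = m%:~R + c%:~R * s.
Proof. by rewrite /alphaq mulrC divfK // intr_eq0. Qed.

Lemma Ep_alpha : evalZ (Ep Q m c) alphaq = 0.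
Proof. by rewrite evalEp_fact Qalpha; ring. Qed.

Lemma Ep_neq0 : Ep Q m c != 0.
Proof.
apply/eqP => h; have := congr1 (fun p : {poly int} => p`_2) h.
rewrite coef_Poly /= coef0 => /eqP; rewrite expf_eq0 /=.
by rewrite (negbTE Q0).
Qed.

Lemma s_irr (r : rat) : ratr r != s.
Proof.
apply/eqP => h; have := sq_ne2 r; rewrite -(inj_eq (@fmorph_inj _ R (@ratr R))).
by rewrite rmorphXn /= h s2 rmorph_nat eqxx.
Qed.

Lemma norat (P : {poly int}) : P != 0 -> evalZ P alphaq = 0 -> (3 <= size P)%N.
Proof.
move=> P0 Pa; rewrite leqNgt; apply/negP => sP.
have sP2 : (size P <= 2)%N by [].
move: Pa; rewrite (evalZ_wide _ sP2) !big_ord_recr big_ord0 /= expr0 expr1 add0r mulr1.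
have [p1 | p1] := eqVneq (P`_1) 0.
  rewrite p1 mul0r addr0 => /eqP; rewrite intr_eq0 => /eqP p0.
  move: P0; rewrite -lead_coef_eq0 /lead_coef.
  by case: (size P) sP2 => [|[|[|]]] //= _; rewrite ?p0 ?p1 ?coef0 ?eqxx.
move=> e.
have ha : alphaq = - (P`_0)%:~R / (P`_1)%:~R.
  have p1R : (P`_1)%:~R != 0 :> R by rewrite intr_eq0.
  apply: (mulfI p1R); rewrite [RHS]mulrCA divff // mulr1.
  by apply/eqP; rewrite -addr_eq0 addrC e.
pose r : rat := ((Q%:~R * (- (P`_0)%:~R / (P`_1)%:~R)) - m%:~R) / c%:~R.
apply/negP: (s_irr r); rewrite negbK.
rewrite /r fmorph_div /= rmorphB /= rmorphM /= fmorph_div /= rmorphN /= !ratr_int.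
rewrite -ha Qalpha; apply/eqP; field; by rewrite intr_eq0.
Qed.

Definition Pp := zprimitive (Ep Q m c).

Lemma Ep_Pp : Ep Q m c = zcontents (Ep Q m c) *: Pp.
Proof. exact: zpolyEprim. Qed.

Lemma cont_neq0 : zcontents (Ep Q m c) != 0.
Proof. by rewrite zcontents_eq0 Ep_neq0. Qed.

Lemma Pp_alpha : evalZ Pp alphaq = 0.
Proof.
have := Ep_alpha; rewrite Ep_Pp evalZZ => /eqP; rewrite mulf_eq0 intr_eq0.
by rewrite (negbTE cont_neq0) /= => /eqP.
Qed.

Lemma Pp_neq0 : Pp != 0.
Proof. by rewrite zprimitive_eq0 Ep_neq0. Qed.

Lemma size_Pp : size Pp = 3%N.
Proof.
apply/eqP; rewrite eqn_leq; apply/andP; split.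
  by rewrite /Pp size_zprimitive size_Ep.
exact: norat Pp_neq0 Pp_alpha.
Qed.

Lemma minpoly_Pp : minpolyZ alphaq Pp.
Proof.
split; first exact: Pp_neq0.
split; first exact: Pp_alpha.
split; first by rewrite zcontents_primitive Ep_neq0.
by move=> P P0 Pa; rewrite size_Pp; apply: norat.
Qed.

Lemma evalPp_le (x : R) : `|evalZ Pp x| <= `|evalZ (Ep Q m c) x|.
Proof.
rewrite [in X in _ <= X]Ep_Pp evalZZ normrM ler_peMl //.
by rewrite -intr_norm ler1z -abszE lez_nat absz_gt0 cont_neq0.
Qed.

Lemma evalPp_neq0 (x : R) : evalZ (Ep Q m c) x != 0 -> evalZ Pp x != 0.
Proof. by rewrite Ep_Pp evalZZ mulf_eq0 negb_or => /andP[]. Qed.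

Lemma height_Pp : (heightZ Pp <= heightZ (Ep Q m c))%N.
Proof.
apply: height_le => i; apply: leq_trans (coef_le_height _ i).
rewrite [in X in (_ <= X)%N]Ep_Pp coefZ abszM leq_pmull //.
by rewrite absz_gt0 cont_neq0.
Qed.

End Quad.

Lemma height_Ep (Q m c : int) : (`|m| <= `|Q|)%R -> (`|c| <= 2)%R -> (Q != 0) ->
  (heightZ (Ep Q m c) <= 9 * absz Q ^ 2)%N.
Proof.
move=> hm hc hQ; apply: height_le => i.
have hq : (1 <= `|Q|)%R by rewrite -abszE lez_nat absz_gt0.
rewrite coef_Poly; case: i => [|[|[|i]]] /=; last by rewrite nth_nil.
- nia.
- nia.
- nia.
Qed.


Definition Kf n D := (12 * 2 ^ (n + 3) * D ^ n)%N.
Definition Qf n D := (D * Kf n D)%N.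
Definition Lf n D := (36 * (9 * Qf n D ^ 2) ^ n.+1)%N.
Definition cb (b : bool) : int := if b then 2 else 1.

Section Constr.
Variable R : realType.
Variable sg : nat -> bool.

Definition s2r : R := Num.sqrt 2.

Definition flo b n D : int := Num.floor ((cb b)%:~R * s2r * (Lf n D)%:R).

Fixpoint st n : nat * int :=
  if n is k.+1 then
    let (D, A) := st k in
    ((Lf k D * Qf k D)%N, A * (Lf k D * Kf k D)%N%:Z + flo (sg k) k D + 1)
  else (1%N, 0).

Definition Dn n := (st n).1.
Definition An n := (st n).2.
Definition Kn n := Kf n (Dn n).
Definition Qn n := Qf n (Dn n).
Definition Ln n := Lf n (Dn n).
Definition cn n := cb (sg n).

Lemma stS n : st n.+1 = ((Ln n * Qn n)%N, An n * (Ln n * Kn n)%N%:Z + flo (sg n) n (Dn n) + 1).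
Proof. by rewrite /= /Ln /Qn /Kn /An /Dn; case: (st n). Qed.

Lemma DnS n : Dn n.+1 = (Ln n * Qn n)%N.
Proof. by rewrite /Dn stS. Qed.

Lemma AnS n : An n.+1 = An n * (Ln n * Kn n)%N%:Z + flo (sg n) n (Dn n) + 1.
Proof. by rewrite /An stS. Qed.

Lemma Dn_gt0 n : (0 < Dn n)%N.
Proof.
elim: n => [//|n IH]; rewrite DnS /Ln /Qn /Lf /Qf /Kf.
by rewrite !muln_gt0 !expn_gt0 !muln_gt0 !expn_gt0 IH.
Qed.

Lemma Kn_ge n : (8 * Dn n ^ n <= Kn n)%N /\ (2 ^ (n + 3) <= Kn n)%N.
Proof.
have hD := Dn_gt0 n; rewrite /Kn /Kf.
have h1 : (0 < 2 ^ (n + 3))%N by rewrite expn_gt0.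
have h2 : (0 < Dn n ^ n)%N by rewrite expn_gt0 hD.
move: h1 h2; generalize (2 ^ (n + 3))%N (Dn n ^ n)%N => a b ha hb.
split; nia.
Qed.

Lemma Qn_ge n : (Dn n <= Qn n)%N /\ (2 ^ (n + 3) <= Qn n)%N /\ (Kn n <= Qn n)%N.
Proof.
have := Kn_ge n; have := Dn_gt0 n; rewrite /Qn /Qf -/(Kn n) => hD [h1 h2].
have h3 : (0 < 2 ^ (n + 3))%N by rewrite expn_gt0.
move: h1 h2 h3 hD; generalize (2 ^ (n + 3))%N (Dn n ^ n)%N (Kn n) (Dn n) => a b k d.
move=> *; split; [nia | split; nia].
Qed.

Lemma Ln_ge n : (36 * (9 * Qn n ^ 2) ^ n.+1 <= Ln n)%N.
Proof. by rewrite /Ln /Lf. Qed.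

Lemma Ln_ge36 n : (36 <= Ln n)%N.
Proof.
rewrite /Ln /Lf -/(Qn n).
have [_ [h _]] := Qn_ge n.
have h3 : (0 < 2 ^ (n + 3))%N by rewrite expn_gt0.
have hQ : (0 < Qn n)%N by move: h h3; generalize (2 ^ (n + 3))%N (Qn n); lia.
have : (0 < (9 * Qn n ^ 2) ^ n.+1)%N by rewrite expn_gt0 muln_gt0 expn_gt0 hQ.
generalize ((9 * Qn n ^ 2) ^ n.+1)%N => a; lia.
Qed.

Lemma Dn_ge n : (2 ^ n <= Dn n)%N.
Proof.
elim: n => [|n IH]; first by rewrite expn0 Dn_gt0.
rewrite DnS expnS; have := Ln_ge36 n; have [h _] := Qn_ge n.
move: IH h; generalize (2 ^ n)%N (Dn n) (Qn n) (Ln n) => a b c d.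
nia.
Qed.

Lemma QnS_ge n : (Ln n * Qn n <= Qn n.+1)%N.
Proof. by rewrite -DnS; have [h _] := Qn_ge n.+1. Qed.


Lemma QnD_ge n j : (2 ^ j * Qn n <= Qn (n + j))%N.
Proof.
elim: j => [|j IH]; first by rewrite expn0 mul1n addn0.
rewrite addnS expnS; have := QnS_ge (n + j); have := Ln_ge36 (n + j).
move: IH; generalize (2 ^ j)%N (Qn n) (Qn (n + j)) (Ln (n + j)) (Qn (n + j).+1).
move=> a b c d e; nia.
Qed.

Lemma s2r_sq : s2r ^+ 2 = 2. Proof. by rewrite sqr_sqrtr. Qed.
Lemma s2r_bounds : 1 < s2r /\ s2r < 3 / 2.
Proof.
have h := s2r_sq; have h0 : 0 <= s2r by apply: sqrtr_ge0.
split; nra.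
Qed.

Lemma div_le (c a b : R) : 0 <= c -> 0 < a -> a <= b -> c / b <= c / a.
Proof.
move=> c0 a0 ab; apply: ler_wpM2l => //.
by rewrite lef_pV2 // ?posrE //; apply: lt_le_trans ab.
Qed.

Definition Sp n : R := (An n)%:~R / (Dn n)%:R.
Definition fl n := flo (sg n) n (Dn n).
Definition rho n : R := (fl n + 1)%:~R / ((Ln n)%:R * (Qn n)%:R).

Lemma Qn_gt0 n : (0 < Qn n)%N.
Proof. by have [h _] := Qn_ge n; apply: leq_trans h; apply: Dn_gt0. Qed.
Lemma Kn_gt0 n : (0 < Kn n)%N.
Proof. by have [_ h] := Kn_ge n; apply: leq_trans h; rewrite expn_gt0. Qed.
Lemma Ln_gt0 n : (0 < Ln n)%N.
Proof. by have h := Ln_ge36 n; apply: leq_trans h. Qed.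

Lemma QnE n : Qn n = (Dn n * Kn n)%N.
Proof. by []. Qed.

Lemma S_succ n : Sp n.+1 = Sp n + rho n.
Proof.
rewrite /Sp /rho AnS DnS QnE /fl.
have hD : (Dn n)%:R != 0 :> R by rewrite pnatr_eq0 -lt0n Dn_gt0.
have hK : (Kn n)%:R != 0 :> R by rewrite pnatr_eq0 -lt0n Kn_gt0.
have hL : (Ln n)%:R != 0 :> R by rewrite pnatr_eq0 -lt0n Ln_gt0.
move: hD hK hL; generalize (Ln n) (Kn n) (Dn n) (An n) (flo (sg n) n (Dn n)).
move=> l k d a f hD hK hL.
rewrite !intrD !intrM -!pmulrn !natrM.
by field; rewrite hD hK hL.
Qed.

Lemma fl_bounds n : (fl n)%:~R <= (cn n)%:~R * s2r * (Ln n)%:R /\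
   (cn n)%:~R * s2r * (Ln n)%:R < (fl n + 1)%:~R.
Proof. by split; [apply: Num.Theory.floor_le | apply: floorD1_gt]. Qed.


Lemma rho_gen (c s l q F x : R) : 0 < l -> 0 < q -> x = c * s * l ->
  F - 1 <= x -> x < F ->
  c * s / q < F / (l * q) /\ F / (l * q) <= c * s / q + 1 / (l * q).
Proof.
move=> l0 q0 ex h1 h2.
have l0' : l != 0 by rewrite gt_eqF.
have q0' : q != 0 by rewrite gt_eqF.
have e1 : F / (l * q) - c * s / q = (F - x) / (l * q) by rewrite ex; field; rewrite ?l0' ?q0'.
have e2 : c * s / q + 1 / (l * q) - F / (l * q) = (1 - (F - x)) / (l * q).
  by rewrite ex; field; rewrite ?l0' ?q0'.
split.
  by rewrite -subr_gt0 e1 divr_gt0 ?mulr_gt0 // subr_gt0.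
rewrite -subr_ge0 e2; apply: divr_ge0; first lra.
by apply: mulr_ge0; lra.
Qed.

Lemma Qn_pos n : 0 < (Qn n)%:R :> R. Proof. by rewrite ltr0n Qn_gt0. Qed.
Lemma Ln_pos n : 0 < (Ln n)%:R :> R. Proof. by rewrite ltr0n Ln_gt0. Qed.
Lemma Dn_pos n : 0 < (Dn n)%:R :> R. Proof. by rewrite ltr0n Dn_gt0. Qed.

Lemma rho_bounds n :
  (cn n)%:~R * s2r / (Qn n)%:R < rho n /\
  rho n <= (cn n)%:~R * s2r / (Qn n)%:R + 1 / ((Ln n)%:R * (Qn n)%:R).
Proof.
have [h1 h2] := fl_bounds n.
apply: (rho_gen (Ln_pos n) (Qn_pos n) erefl) => //.
by rewrite intrD lerBlDr; apply: lerD.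
Qed.

Lemma cn_bounds n : 1 <= (cn n)%:~R :> R /\ (cn n)%:~R <= 2 :> R.
Proof. by rewrite /cn /cb; case: (sg n) => /=; split; rewrite ?ler1n ?lerr // ler_nat. Qed.

Lemma rho_pos n : 0 < rho n.
Proof.
have [h _] := rho_bounds n; apply: le_lt_trans h.
have [c1 _] := cn_bounds n; have [s1 _] := s2r_bounds.
have q0 := Qn_pos n.
by apply: divr_ge0; [apply: mulr_ge0; lra | lra].
Qed.

Lemma rho_le4 n : rho n <= 4 / (Qn n)%:R.
Proof.
have [_ h] := rho_bounds n; apply: le_trans h _.
have [_ c2] := cn_bounds n; have [s1 s2] := s2r_bounds.
have L1 : 1 <= (Ln n)%:R :> R by rewrite ler1n Ln_gt0.
have q0 := Qn_pos n.
move: c2 s1 s2 L1 q0.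
set c := (cn n)%:~R; set l := (Ln n)%:R; set q := (Qn n)%:R; set s := s2r.
clearbody c l q s => c2 s1 s2 L1 q0.
have e : c * s / q + 1 / (l * q) = (c * s + 1 / l) / q by field; rewrite ?gt_eqF //; lra.
rewrite e ler_pM2r ?invr_gt0 //.
have : 1 / l <= 1 by rewrite ler_pdivrMr ?mul1r //; lra.
have : c * s <= 2 * s by apply: ler_wpM2r; lra.
lra.
Qed.


Lemma S_mono n j : Sp n <= Sp (n + j).
Proof.
elim: j => [|j IH]; first by rewrite addn0.
by rewrite addnS S_succ; apply: le_trans IH _; rewrite lerDl ltW // rho_pos.
Qed.

Lemma S_tail n j : Sp (n + j) + 8 / ((2 ^ j)%:R * (Qn n)%:R) <= Sp n + 8 / (Qn n)%:R.
Proof.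
elim: j => [|j IH]; first by rewrite addn0 expn0 mul1r.
apply: le_trans IH; rewrite addnS S_succ.
have q0 := Qn_pos n; have e0 : 0 < (2 ^ j)%:R :> R by rewrite ltr0n expn_gt0.
have h1 : rho (n + j) <= 4 / ((2 ^ j)%:R * (Qn n)%:R).
  apply: le_trans (rho_le4 _) _; apply: div_le => //; first by rewrite mulr_gt0.
  by rewrite -natrM ler_nat QnD_ge.
have e : 8 / ((2 ^ j.+1)%:R * (Qn n)%:R) = 4 / ((2 ^ j)%:R * (Qn n)%:R) :> R.
  rewrite expnS natrM; field.
  by rewrite !gt_eqF.
rewrite e; move: h1; set a := rho _; set b := 4 / _; set t := 8 / _.
have : t = b + b by rewrite /t /b; field; rewrite !gt_eqF.
lra.
Qed.

Lemma S_ge0 n : 0 <= Sp n.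
Proof. have := S_mono 0 n; rewrite /Sp /An /Dn /= mul0r; by []. Qed.

Lemma S_le1 n : Sp n <= 1.
Proof.
have := S_tail 0 n; rewrite add0n.
have q8 : 8 <= (Qn 0)%:R :> R.
  by have [_ [h _]] := Qn_ge 0; rewrite (le_trans _ (_ : (2 ^ (0 + 3))%:R <= _)) ?ler_nat.
have : Sp 0 = 0 by rewrite /Sp /An /Dn /= mul0r.
have e0 : 0 < (2 ^ n)%:R :> R by rewrite ltr0n expn_gt0.
have : 0 <= 8 / ((2 ^ n)%:R * (Qn 0)%:R) :> R by rewrite divr_ge0 // mulr_ge0 // ltW // Qn_pos.
have : 8 / (Qn 0)%:R <= 1 :> R by rewrite ler_pdivrMr ?mul1r // Qn_pos.
lra.
Qed.

Definition xiC : R := sup (range Sp).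

Lemma S_ub : has_ubound (range Sp).
Proof. by exists 1 => _ [k _ <-]; apply: S_le1. Qed.

Lemma xi_ge n : Sp n <= xiC.
Proof. by apply: ub_le_sup; [exact: S_ub | exists n]. Qed.

Lemma xi_le n : xiC <= Sp n + 8 / (Qn n)%:R.
Proof.
apply: ge_sup; first by exists (Sp 0), 0%N.
move=> _ [k _ <-]; have [kn | nk] := leqP k n.
  rewrite -(subnKC kn); apply: le_trans (S_mono k (n - k)) _.
  by rewrite lerDl divr_ge0 // ltW // Qn_pos.
rewrite -(subnKC (ltnW nk)); apply: le_trans (S_tail n (k - n)).
by rewrite lerDl divr_ge0 // mulr_ge0 // ltW // ?Qn_pos // ltr0n expn_gt0.
Qed.


Lemma A_bounds n : 0 <= An n /\ An n <= (Dn n)%:Z.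
Proof.
have d0 := Dn_pos n.
have e : (An n)%:~R = Sp n * (Dn n)%:R :> R by rewrite /Sp divfK // gt_eqF.
have h0 := S_ge0 n; have h1 := S_le1 n.
split.
  by rewrite -(ler0z R) e mulr_ge0 // ltW.
rewrite -(ler_int R) e -pmulrn; apply: le_trans (ler_wpM2r (ltW d0) h1) _.
by rewrite mul1r.
Qed.

Lemma xi_S_pos n : Sp n < xiC.
Proof.
apply: lt_le_trans (xi_ge n.+1); by rewrite S_succ ltrDl rho_pos.
Qed.

Lemma lin_approx n :
  (size (Poly [:: - An n; (Dn n)%:Z]) <= 2)%N /\
  (heightZ (Poly [:: - An n; (Dn n)%:Z]) <= Dn n)%N /\
  0 < `|evalZ (Poly [:: - An n; (Dn n)%:Z]) xiC| /\
  `|evalZ (Poly [:: - An n; (Dn n)%:Z]) xiC| <= 1 / ((Dn n)%:R ^+ n).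
Proof.
set P := Poly _.
have sP : (size P <= 2)%N by apply: size_Poly.
have [a0 aD] := A_bounds n.
have eP : evalZ P xiC = (Dn n)%:R * (xiC - Sp n).
  rewrite (evalZ_wide _ sP) !big_ord_recr big_ord0 /= !coef_Poly /= add0r expr0 mulr1 expr1.
  rewrite /Sp mulrBr mulrCA divff ?gt_eqF ?Dn_pos // mulr1 rmorphN /= -pmulrn.
  by rewrite addrC.
split => //; split.
  apply: height_le => i; rewrite coef_Poly; case: i => [|[|i]] /=; last by rewrite nth_nil.
    by rewrite abszN -lez_nat gez0_abs.
  by [].
have d0 := Dn_pos n; have p0 := xi_S_pos n.
rewrite eP; split; first by rewrite normr_gt0 mulf_neq0 ?gt_eqF // subr_gt0.
rewrite ger0_norm; last by rewrite mulr_ge0 // ltW // subr_gt0.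
have h1 := xi_le n.
rewrite -subr_gt0 in p0.
have [hK _] := Kn_ge n.
have k8 : 8 * (Dn n)%:R ^+ n <= (Kn n)%:R :> R by rewrite -natrX -(natrM R 8) ler_nat.
have dn0 : 0 < (Dn n)%:R ^+ n :> R by rewrite exprn_gt0.
have qE : (Qn n)%:R = (Dn n)%:R * (Kn n)%:R :> R by rewrite QnE natrM.
have k0 : 0 < (Kn n)%:R :> R by rewrite ltr0n Kn_gt0.
have xq : (xiC - Sp n) * (Qn n)%:R <= 8.
  by rewrite -ler_pdivlMr ?Qn_pos // lerBlDl.
move: xq k8 dn0 qE k0 d0 p0.
set d := (Dn n)%:R; set k := (Kn n)%:R; set q := (Qn n)%:R; set dn := d ^+ n.
set x := xiC - Sp n. clearbody d k q dn x => xq k8 dn0 qE k0 d0 p0.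
rewrite ler_pdivlMr //.
have t1 : d * x * (8 * dn) <= d * x * k by rewrite ler_wpM2l //; apply: mulr_ge0; apply: ltW.
rewrite qE in xq.
have e1 : x * (d * k) = d * x * k by ring.
have e2 : d * x * (8 * dn) = 8 * (d * x * dn) by ring.
lra.
Qed.


Lemma quad_approx n :
  let Qz := (Qn n)%:Z in let mz := An n * (Kn n)%:Z in let c := cn n in
  let H : R := (9 * Qn n ^ 2)%:R in
  let P := Pp Qz mz c in let al := alphaq R Qz mz c in
  [/\ alg_deg2_height al (heightZ P), (heightZ P <= 9 * Qn n ^ 2)%N,
      0 < `|xiC - al| /\ `|xiC - al| <= 1 / H ^+ n.+1,
      irreducibleZ P /\ size P = 3%N &
      0 < `|evalZ P xiC| /\ `|evalZ P xiC| <= 1 / H ^+ n].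
Proof.
move=> Qz mz c H P al.
have Q0 : Qz != 0 by rewrite /Qz eqz_nat -lt0n Qn_gt0.
have c0 : c != 0 by rewrite /c /cn /cb; case: sg.
have mP := minpoly_Pp R mz Q0 c0.
have sP := size_Pp R mz Q0 c0.
have d0 := Dn_pos n; have k0 : 0 < (Kn n)%:R :> R by rewrite ltr0n Kn_gt0.
have q0 := Qn_pos n; have l0 := Ln_pos n.
have alE : al = Sp n + c%:~R * s2r / (Qn n)%:R.
  rewrite /al /alphaq /Sp /mz /Qz QnE intrM -!pmulrn natrM /s2r.
  by field; rewrite !gt_eqF.
have [rl rh] := rho_bounds n.
have x1 := xi_ge n.+1; have x2 := xi_le n.+1.
rewrite S_succ in x1 x2.
have qq : (Ln n)%:R * (Qn n)%:R <= (Qn n.+1)%:R :> R by rewrite -natrM ler_nat QnS_ge.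
have x3 : 8 / (Qn n.+1)%:R <= 8 / ((Ln n)%:R * (Qn n)%:R) :> R.
  by apply: div_le => //; rewrite mulr_gt0.
have dpos : 0 < xiC - al by rewrite alE subr_gt0; apply: lt_le_trans x1; rewrite ltrD2l.
have dle : xiC - al <= 9 / ((Ln n)%:R * (Qn n)%:R).
  rewrite alE lerBlDl; apply: le_trans x2 _.
  have -> : 9 / ((Ln n)%:R * (Qn n)%:R) = 1 / ((Ln n)%:R * (Qn n)%:R) + 8 / ((Ln n)%:R * (Qn n)%:R) :> R.
    by field; rewrite !gt_eqF.
  move: rh x3; set a := rho n; set b := 8 / _; set b' := 8 / _; set e := 1 / _; lra.
have Q1 : 1 <= (Qn n)%:R :> R by rewrite ler1n Qn_gt0.
have H9 : 9 <= H.
  rewrite /H natrM natrX ler_pMr // ?expr_ge1 //; lra.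
have LE : (Ln n)%:R = 36 * H ^+ n.+1 :> R by rewrite /Ln /Lf natrM natrX.
have Hn0 : 0 < H ^+ n by rewrite exprn_gt0 //; lra.
have d9 : (Qn n)%:R * (xiC - al) <= 9 / (Ln n)%:R.
  have e : 9 / ((Ln n)%:R * (Qn n)%:R) = 9 / (Ln n)%:R / (Qn n)%:R :> R.
    by field; rewrite !gt_eqF.
  by rewrite mulrC -ler_pdivlMr // -e.
have hP : (heightZ P <= 9 * Qn n ^ 2)%N.
  apply: leq_trans (height_Pp mz c Q0) _.
  have [a0 aD] := A_bounds n.
  apply: height_Ep => //; last by rewrite /c /cn /cb; case: sg.
  rewrite /mz /Qz QnE PoszM normrM !ger0_norm // ?mulr_ge0 //.
  by rewrite ler_wpM2r.
have [c1 c2] := cn_bounds n; have [s1 s2] := s2r_bounds.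
have eE := evalEp_fact Qz mz c xiC.
have qa := Qalpha R mz c Q0.
have qz : Qz%:~R = (Qn n)%:R :> R by rewrite /Qz -pmulrn.
rewrite qz in eE qa; rewrite -/s2r in eE qa.
have u1 : (Qn n)%:R * xiC - mz%:~R - c%:~R * s2r = (Qn n)%:R * (xiC - al).
  by rewrite mulrBr qa; ring.
have u2 : (Qn n)%:R * xiC - mz%:~R + c%:~R * s2r = (Qn n)%:R * (xiC - al) + 2 * (c%:~R * s2r).
  by rewrite mulrBr qa; ring.
rewrite u1 u2 in eE.
have Hh : 0 < H ^+ n.+1 by rewrite exprn_gt0 //; lra.
have k9 : 9 / (Ln n)%:R <= 1 / H ^+ n.+1.
  rewrite LE; have -> : 9 / (36 * H ^+ n.+1) = (1 / H ^+ n.+1) / 4 by field; rewrite gt_eqF.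
  have : 0 <= 1 / H ^+ n.+1 by rewrite divr_ge0 // ltW.
  lra.
have k63 : 63 / (Ln n)%:R <= 1 / H ^+ n.
  rewrite LE exprS; have -> : 63 / (36 * (H * H ^+ n)) = (1 / H ^+ n) * (7 / (4 * H)).
    by field; rewrite !gt_eqF //; lra.
  rewrite ler_piMr ?divr_ge0 ?ltW // ltr_pdivrMr; lra.
have L36 : 36 <= (Ln n)%:R :> R by rewrite (ler_nat R 36) Ln_ge36.
have L9 : 9 / (Ln n)%:R <= 1 :> R.
  have h9 : 9 / (Ln n)%:R <= 9 / 36 :> R by apply: div_le => //; lra.
  by apply: (le_trans h9); rewrite ler_pdivrMr // mul1r ler_nat.
split.
- by exists P; split => //; split.
- exact: hP.
- rewrite gtr0_norm //; split => //; apply: le_trans k9.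
  apply: le_trans d9; rewrite ler_peMl // ltW //.
- by split => //; apply: minpoly_irr mP sP.
have Epos : 0 < evalZ (Ep Qz mz c) xiC.
  by rewrite eE mulr_gt0 ?addr_gt0 ?mulr_gt0 //; lra.
split.
  by rewrite normr_gt0; apply: evalPp_neq0; rewrite gt_eqF.
apply: (le_trans (evalPp_le mz c Q0 xiC)).
rewrite gtr0_norm // eE; apply: le_trans k63.
move: d9 L9; set u := (Qn n)%:R * (xiC - al); set cs := c%:~R * s2r.
have u0 : 0 < u by rewrite mulr_gt0.
have cs3 : cs <= 3 by rewrite /cs; nra.
move=> d9 L9.
have : 63 / (Ln n)%:R = 7 * (9 / (Ln n)%:R) :> R by ring.
nra.
Qed.

End Constr.


Section Final.
Variable R : realType.

Lemma big_n (H0 w : R) : exists n : nat, H0 <= n%:R /\ w <= n%:R.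
Proof.
have h : 0 <= `|H0| + `|w| by rewrite addr_ge0.
exists (Num.Def.archi_bound (`|H0| + `|w|)).
have := archi_boundP h; set N := (_ %:R).
have := ler_norm H0; have := ler_norm w; have := normr_ge0 H0; have := normr_ge0 w.
move=> *; split; lra.
Qed.

Lemma pow_bound (H w : R) (n : nat) : 1 <= H -> w <= n%:R -> 1 / H ^+ n <= H `^ (- w).
Proof.
move=> H1 wn; have H0 : 0 <= H by lra.
rewrite div1r -powR_invn //; apply: ler_powR => //; lra.
Qed.

Lemma wset_all (C : {poly int} -> Prop) (x : R) :
  (forall n : nat, exists P, exists H : R, n%:R <= H /\ 1 <= H /\ C P /\
     (heightZ P)%:R <= H /\ 0 < `|evalZ P x| /\ `|evalZ P x| <= 1 / H ^+ n) ->
  forall w, wset C x w.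
Proof.
move=> hyp w H0; have [n [n1 n2]] := big_n H0 w.
have [P [H [nH [H1 [CP [hP [p0 p1]]]]]]] := hyp n.
exists H; split; first lra.
exists P; do 3!split => //.
by apply: (le_trans p1); apply: pow_bound.
Qed.

Lemma wstar_all (x : R) :
  (forall n : nat, exists a : R, exists h : nat, exists H : R, n%:R <= H /\ 1 <= H /\
     alg_deg2_height a h /\ (1 <= h)%N /\ h%:R <= H /\ 0 < `|x - a| /\ `|x - a| <= 1 / H ^+ n.+1) ->
  forall w, wstar_set x w.
Proof.
move=> hyp w H0; have [n [n1 n2]] := big_n H0 w.
have [a [h [H [nH [H1 [ah [h1 [hH [p0 p1]]]]]]]]] := hyp n.
exists H; split; first lra.
exists a, h; do 3!split => //.
apply: (le_trans p1).
have h0 : 0 < h%:R :> R by rewrite ltr0n.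
rewrite exprS invfM -div1r mulrA; apply: ler_pM.
all: try (rewrite ?div1r invr_ge0 ?exprn_ge0 //; lra).
- by rewrite mul1r div1r lef_pV2 ?posrE //; lra.
- by rewrite -div1r; apply: pow_bound.
Qed.

Lemma esup_all (A : set R) : (forall w, A w) -> ereal_sup [set w%:E | w in A] = +oo%E.
Proof.
move=> hA; apply: hasNub_ereal_sup; last by exists 0.
move=> [M hM]; have := hM (M + 1) (hA _); lra.
Qed.


Lemma st_eq (sg1 sg2 : nat -> bool) n : (forall k, (k < n)%N -> sg1 k = sg2 k) ->
  forall k, (k <= n)%N -> st R sg1 k = st R sg2 k.
Proof.
move=> h; elim => [//|k IH] kn.
by rewrite /= IH ?(ltnW kn) // h.
Qed.

Lemma sep (sg1 sg2 : nat -> bool) n : st R sg1 n = st R sg2 n ->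
  sg1 n = false -> sg2 n = true -> xiC R sg1 < xiC R sg2.
Proof.
move=> e h1 h2.
have eD : Dn R sg1 n = Dn R sg2 n by rewrite /Dn e.
have eA : An R sg1 n = An R sg2 n by rewrite /An e.
have eS : Sp R sg1 n = Sp R sg2 n by rewrite /Sp eA eD.
have eQ : Qn R sg1 n = Qn R sg2 n by rewrite /Qn eD.
have eL : Ln R sg1 n = Ln R sg2 n by rewrite /Ln eD.
have x1 := xi_le R sg1 n.+1; rewrite S_succ in x1.
have x2 := xi_ge R sg2 n.+1; rewrite S_succ in x2.
have [_ r1] := rho_bounds R sg1 n.
have [r2 _] := rho_bounds R sg2 n.
have c1 : (cn sg1 n)%:~R = 1 :> R by rewrite /cn h1.
have c2 : (cn sg2 n)%:~R = 2 :> R by rewrite /cn h2.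
rewrite c1 in r1; rewrite c2 -eQ in r2; rewrite -eS in x2.
have q0 := Qn_pos R sg1 n; have l0 := Ln_pos R sg1 n.
have qq : (Ln R sg1 n)%:R * (Qn R sg1 n)%:R <= (Qn R sg1 n.+1)%:R :> R
  by rewrite -natrM ler_nat QnS_ge.
have x3 : 8 / (Qn R sg1 n.+1)%:R <= 8 / ((Ln R sg1 n)%:R * (Qn R sg1 n)%:R) :> R.
  by apply: div_le => //; rewrite mulr_gt0.
have [s1 _] := s2r_bounds R.
have L36 : 36 <= (Ln R sg1 n)%:R :> R by rewrite (ler_nat R 36) Ln_ge36.
have key : 9 / ((Ln R sg1 n)%:R * (Qn R sg1 n)%:R) < s2r R / (Qn R sg1 n)%:R.
  have -> : 9 / ((Ln R sg1 n)%:R * (Qn R sg1 n)%:R) = (9 / (Ln R sg1 n)%:R) / (Qn R sg1 n)%:R :> R.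
    by field; rewrite !gt_eqF.
  rewrite ltr_pM2r ?invr_gt0 //.
  have : 9 / (Ln R sg1 n)%:R <= 9 / 36 :> R by apply: div_le => //; lra.
  lra.
have e9 : 1 / ((Ln R sg1 n)%:R * (Qn R sg1 n)%:R) + 8 / ((Ln R sg1 n)%:R * (Qn R sg1 n)%:R)
   = 9 / ((Ln R sg1 n)%:R * (Qn R sg1 n)%:R) :> R by field; rewrite !gt_eqF.
have e2 : 2 * s2r R / (Qn R sg1 n)%:R = s2r R / (Qn R sg1 n)%:R + s2r R / (Qn R sg1 n)%:R :> R.
  by field; rewrite gt_eqF.
rewrite [1 * s2r R]mul1r in r1.
move: x1 x2 r1 r2 x3 key e9 e2.
set a := xiC R sg1; set b := xiC R sg2; set sn := Sp R sg1 n.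
set u := 1 / _; set v := 8 / (_ * _); set w := 9 / _; set z := s2r R / _.
set y := 8 / (Qn R sg1 n.+1)%:R; set t := 2 * s2r R / _.
move=> *; lra.
Qed.

Lemma xi_inj : injective (xiC R).
Proof.
move=> sg1 sg2 e; apply/funext => k; apply/eqP/negPn/negP => hne.
have ex : exists n, sg1 n != sg2 n by exists k.
case: (ex_minnP ex) => n hn hmin.
have hlt : forall j, (j < n)%N -> sg1 j = sg2 j.
  move=> j jn; apply/eqP/negPn/negP => hj.
  by have := hmin j hj; rewrite leqNgt jn.
have est := st_eq hlt (leqnn n).
move: hn e; case h1 : (sg1 n); case h2 : (sg2 n) => // _ e.
- have := sep (esym est) h2 h1; rewrite e; lra.
- have := sep est h1 h2; rewrite e; lra.
Qed.

Lemma cantor (F : (nat -> bool) -> nat) : injective F -> False.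
Proof.
move=> Finj.
have hg : forall n, {sg : nat -> bool | (exists s, F s = n) -> F sg = n}.
  move=> n; case: (pselect (exists s, F s = n)) => [h|h].
    by have [s hs] := cid h; exists s.
  by exists (fun _ => false) => h'.
pose g n := proj1_sig (hg n).
pose d k := ~~ g k k.
have gd : g (F d) = d by apply: Finj; apply: (proj2_sig (hg (F d))); exists d.
have h : d (F d) = ~~ g (F d) (F d) by [].
rewrite gd in h.
by move: h; case: (d (F d)).
Qed.

Lemma good (sg : nat -> bool) :
  liouville (xiC R sg) /\ w_eq2 (xiC R sg) = +oo%E /\ w_eq2_star (xiC R sg) = +oo%E.
Proof.
have nD : forall n, (n <= Dn R sg n)%N.
  by move=> n; apply: leq_trans (Dn_ge R sg n); apply: ltnW; apply: ltn_expl.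
have nQ : forall n, (n <= 9 * Qn R sg n ^ 2)%N.
  move=> n; apply: leq_trans (nD n) _; have [h _] := Qn_ge R sg n.
  apply: leq_trans h _; have q0 := Qn_gt0 R sg n.
  move: q0; generalize (Qn R sg n) => q q0; nia.
split; last split.
- rewrite /liouville /w1; apply: esup_all; apply: wset_all => n.
  have [h1 [h2 [h3 h4]]] := lin_approx R sg n.
  exists (Poly [:: - An R sg n; (Dn R sg n)%:Z]), (Dn R sg n)%:R.
  split; first by rewrite ler_nat.
  split; first by rewrite ler1n Dn_gt0.
  by split => //; split => //; rewrite ler_nat.
- rewrite /w_eq2; apply: esup_all; apply: wset_all => n.
  have [_ hP _ [irr sP] [p0 p1]] := quad_approx R sg n.
  eexists; exists (9 * Qn R sg n ^ 2)%:R.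
  split; first by rewrite ler_nat.
  split; first by rewrite ler1n muln_gt0 expn_gt0 Qn_gt0.
  split; first by split; [exact: irr | exact: sP].
  by split; [rewrite ler_nat; exact: hP | split; [exact: p0 | exact: p1]].
- rewrite /w_eq2_star; apply: esup_all; apply: wstar_all => n.
  have [ah hP [p0 p1] [irr sP] _] := quad_approx R sg n.
  eexists; eexists; exists (9 * Qn R sg n ^ 2)%:R.
  split; first by rewrite ler_nat.
  split; first by rewrite ler1n muln_gt0 expn_gt0 Qn_gt0.
  split; first exact: ah.
  split; first by apply: height_ge1; rewrite -size_poly_gt0 sP.
  by split; [rewrite ler_nat; exact: hP | split; [exact: p0 | exact: p1]].
Qed.

End Final.

Local Open Scope classical_set_scope.
Local Open Scope ereal_scope.

Theorem corollary1p4 (R : realType) :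
  ~ countable [set xi : R | liouville xi /\ w_eq2 xi = +oo /\ w_eq2_star xi = +oo].
Proof.
move=> /countable_injP [f finj].
apply: (@cantor (fun sg => f (xiC R sg))).
move=> s1 s2 e; apply: (@xi_inj R); apply: finj => //; apply: mem_set; exact: good.
Qed.
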